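(* For every $J\subseteq\{0,1,\dots,n-1\}$, $$\varphi(X_J)=2^{\#J}\sum_{F\in\mathcal{F}_n,\ F\subseteq J\cup(J+1)}P_F.$$
   Context: $B_n$: signed permutations $w=w_1\dots w_n$, values ordered $\cdots<-2<-1<1<2<\cdots$, $w_0=0$; $\mathrm{Des}(w)=\{i\in\{0,\dots,n-1\}:w_i>w_{i+1}\}$; $X_J=\sum_{\mathrm{Des}(w)\subseteq J}w\in\mathbb{Q}B_n$. $\varphi:\mathbb{Q}B_n\to\mathbb{Q}\mathfrak{S}_n$ is the linear extension of $w\mapsto|w_1|\dots|w_n|$. For $u\in\mathfrak{S}_n$, $\mathrm{Peak}(u)=\{i\in[n-1]:u_{i-1}<u_i>u_{i+1}\}$ with $u_0=0$; $\mathcal{F}_n$ is the set of subsets of $[n-1]$ with no two consecutive integers; $P_F=\sum_{\mathrm{Peak}(u)=F}u$. $J+1=\{j+1:j\in J\}$. *)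

(* Defs.v *)
From HB Require Import structures.
From mathcomp Require Import all_boot all_order all_algebra all_fingroup.
Set Implicit Arguments. Unset Strict Implicit. Unset Printing Implicit Defensive.
Import GRing.Theory Num.Theory.
Local Open Scope ring_scope.

(* A signed permutation of [n]: underlying permutation s of 'I_n together with
   signs e; the one-line notation is w_{i+1} = (-1)^{e i} (s i + 1) for i : 'I_n. *)
Definition bn (n : nat) : finType := ('S_n * {ffun 'I_n -> bool})%type.

Definition bseq n (w : bn n) : seq int :=
  [seq (if w.2 i then - (((w.1 i : nat).+1)%:Z) else ((w.1 i : nat).+1)%:Z)
  | i <- enum 'I_n].

(* w_k for k = 0..n, with w_0 = 0 *)
Definition bval n (w : bn n) (k : nat) : int := nth 0 (0 :: bseq w) k.

Definition Des n (w : bn n) : {set 'I_n} :=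
  [set i : 'I_n | bval w (val i) > bval w (val i).+1].

(* group algebras as coefficient functions *)
Definition QB n := {ffun bn n -> rat}.
Definition QS n := {ffun 'S_n -> rat}.

Definition XJ n (J : {set 'I_n}) : QB n :=
  [ffun w => if Des w \subset J then 1 else 0].

(* linear extension of w |-> |w_1|...|w_n| *)
Definition phi n (x : QB n) : QS n :=
  [ffun u : 'S_n => \sum_(w : bn n | w.1 == u) x w].

(* u_k for k = 0..n, with u_0 = 0, u_{i+1} = u(i) + 1 for i : 'I_n *)
Definition sval n (u : 'S_n) (k : nat) : nat :=
  nth 0%N (0%N :: [seq (u i : nat).+1 | i <- enum 'I_n]) k.

(* Peak(u) ⊆ [n-1] = {1,...,n-1}, viewed inside 'I_n *)
Definition Peak n (u : 'S_n) : {set 'I_n} :=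
  [set i : 'I_n | [&& (0 < val i)%N,
                      (sval u (val i).-1 < sval u (val i))%N &
                      (sval u (val i).+1 < sval u (val i))%N]].

Definition isFn n (F : {set 'I_n}) : bool :=
  [forall i : 'I_n, (i \in F) ==> (0 < val i)%N] &&
  [forall i : 'I_n, forall j : 'I_n, ((i \in F) && (j \in F)) ==> (val j != (val i).+1)].

Definition PF n (F : {set 'I_n}) : QS n :=
  [ffun u => if Peak u == F then 1 else 0].

(* J ∪ (J+1), intersected with {0,...,n-1} (harmless: F ⊆ [n-1]) *)
Definition JJ1 n (J : {set 'I_n}) : {set 'I_n} :=
  [set i : 'I_n | (i \in J) || [exists j in J, val i == (val j).+1]].

(* Main.v *)
Require Import Defs.
From HB Require Import structures.
From mathcomp Require Import all_boot all_order all_algebra all_fingroup zify.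
Import GRing.Theory Num.Theory.
Set Implicit Arguments. Unset Strict Implicit.

Definition asc n (u : 'S_n) (i : 'I_n) : bool := (Defs.sval u i < Defs.sval u i.+1)%N.
Definition prevo n (i : 'I_n) : 'I_n := Ordinal (leq_ltn_trans (leq_pred i) (ltn_ord i)).
Definition tgt n (u : 'S_n) (i : 'I_n) : 'I_n := if asc u i then i else prevo i.

Lemma svalS n (u : 'S_n) (i : 'I_n) : Defs.sval u i.+1 = (u i).+1.
Proof.
rewrite /Defs.sval /= (nth_map i) ?size_enum_ord ?ltn_ord //.
by rewrite nth_ord_enum.
Qed.

Lemma bvalS n (w : bn n) (i : 'I_n) :
  bval w i.+1 = (if w.2 i then - ((w.1 i).+1)%:Z else ((w.1 i).+1)%:Z)%R.
Proof.
rewrite /bval /bseq /= (nth_map i) ?size_enum_ord ?ltn_ord //.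
by rewrite nth_ord_enum.
Qed.

Lemma prevoS n (i : 'I_n) : (0 < i)%N -> val i = (prevo i).+1.
Proof. by rewrite /=; case: i => [[|k] ?]. Qed.

Lemma sval_prev n (u : 'S_n) (i : 'I_n) : (0 < i)%N -> Defs.sval u i = (u (prevo i)).+1.
Proof. by move=> /prevoS ->; rewrite svalS. Qed.

Lemma asc0 n (u : 'S_n) (i : 'I_n) : val i = 0%N -> asc u i.
Proof. by move=> i0; rewrite /asc; have := svalS u i; rewrite i0 => ->. Qed.

Lemma nasc n (u : 'S_n) (i : 'I_n) : ~~ asc u i -> (0 < i)%N /\ (Defs.sval u i.+1 < Defs.sval u i)%N.
Proof.
rewrite /asc -leqNgt => H.
have i0 : (0 < i)%N by case: (posnP i) => // /(asc0 u); rewrite /asc ltnNge H.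
split => //.
rewrite ltn_neqAle H andbT svalS sval_prev // eqSS.
apply/negP => /eqP /val_inj /perm_inj /(congr1 val) /= E.
by move: E; rewrite /= (prevoS i0); lia.
Qed.

Lemma Des_char n (u : 'S_n) (e : {ffun 'I_n -> bool}) (i : 'I_n) :
  (i \in Des (n:=n) (u, e)) = (e (tgt u i) != ~~ asc u i).
Proof.
rewrite inE /tgt.
case: (posnP i) => [i0|ip].
  have ai := asc0 u i0; rewrite ai /= bvalS i0 /bval /=.
  by case: (e i); rewrite /=; lia.
rewrite {2}(prevoS ip) !bvalS /=.
case A: (asc u i).
  move: A; rewrite /asc svalS sval_prev // => A.
  by case: (e i); case: (e (prevo i)); rewrite /=; lia.
have [_] := nasc (negbT A); rewrite svalS sval_prev // => B.
by case: (e i); case: (e (prevo i)); rewrite /=; lia.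
Qed.
Lemma card_constr (I I' : finType) (S : {set I}) (t : I -> I') (v : I -> bool) :
 {in S &, injective t} ->
 #|[set e : {ffun I' -> bool} | [forall i in S, e (t i) == v i]]| = 2 ^ (#|I'| - #|S|).
Proof.
move=> tinj.
pose F := fun x : I' => [pred b : bool | [forall i in S, (t i == x) ==> (b == v i)]].
have eqF : [set e : {ffun I' -> bool} | [forall i in S, e (t i) == v i]] =i family F.
  move=> e; rewrite inE; apply/forall_inP/familyP => /= H.
    move=> x; rewrite inE; apply/forall_inP => i iS; apply/implyP => /eqP <-.
    exact: H.
  move=> i iS; have := H (t i); rewrite inE => /forall_inP /(_ i iS).
  by rewrite eqxx.
rewrite (eq_card eqF) card_family foldrE big_map big_enum /=.
rewrite (eq_bigr (fun x => if x \in t @: S then 1 else 2)); last first.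
  move=> x _; case: imsetP => [[i iS ->]|nx].
    rewrite -(card1 (v i)); apply: eq_card => b; rewrite !inE.
    apply/forall_inP/eqP => [H|->]; first by apply/eqP; have := H i iS; rewrite eqxx.
    move=> j jS; apply/implyP => /eqP tj; by rewrite (tinj _ _ jS iS tj).
  rewrite -(card_bool); apply: eq_card => b; rewrite !inE; apply/forall_inP => i iS.
  by apply/implyP => /eqP tix; case: nx; exists i.
rewrite (bigID (mem (t @: S))) /= big1; last by move=> x ->.
rewrite mul1n (eq_bigr (fun _ => 2)); last by move=> x /negbTE ->.
rewrite prod_nat_const; congr (_ ^ _).
rewrite -(card_in_imset tinj).
rewrite (cardsCs (t @: S)) subKn ?max_card //.
by apply: eq_card => x; rewrite inE.
Qed.


Lemma peakP n (u : 'S_n) (i : 'I_n) :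
  (i \in Peak u) -> [/\ (0 < i)%N, asc u (prevo i) & ~~ asc u i].
Proof.
rewrite inE /asc => /and3P [ip A B]; split => //.
  by rewrite -(prevoS ip).
by rewrite -leqNgt ltnW.
Qed.

Lemma peakI n (u : 'S_n) (i : 'I_n) :
  (0 < i)%N -> asc u (prevo i) -> ~~ asc u i -> i \in Peak u.
Proof.
move=> ip A B; have [_ C] := nasc B.
by rewrite inE ip /= C andbT (prevoS ip).
Qed.

Lemma isFn_Peak n (u : 'S_n) : isFn (Peak u).
Proof.
apply/andP; split; apply/forallP => i.
  by apply/implyP => /peakP [].
apply/forallP => j; apply/implyP => /andP [/peakP [ip Ai Ni] /peakP [jp Aj Nj]].
apply/negP => /eqP E.
have : prevo j = i by apply: val_inj => /=; rewrite E.
by move=> h; rewrite h in Aj; rewrite Aj in Ni.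
Qed.

Lemma count_main n (u : 'S_n) (J : {set 'I_n}) :
  #|[pred e : {ffun 'I_n -> bool} | Des (n:=n) (u, e) \subset J]| =
  if Peak u \subset JJ1 J then (2 ^ #|J|)%N else 0%N.
Proof.
have -> : #|[pred e : {ffun 'I_n -> bool} | Des (n:=n) (u, e) \subset J]| =
   #|[set e : {ffun 'I_n -> bool} | [forall i in ~: J, e (tgt u i) == ~~ asc u i]]|.
  apply: eq_card => e; rewrite !inE; apply/subsetP/forall_inP => H i.
    rewrite inE => iJ; apply/negPn; rewrite -Des_char; apply/negP => /H.
    by rewrite (negbTE iJ).
  by rewrite Des_char => D; apply/negPn/negP => iJ; move: D; rewrite H ?inE // eqxx.
case: ifP => PJ.
  rewrite card_constr.
    by rewrite card_ord [in RHS](cardsCs J) card_ord.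
  move=> i j; rewrite !inE => iJ jJ; rewrite /tgt.
  wlog: i j iJ jJ / asc u i || ~~ asc u j.
    move=> W; case: (boolP (asc u i || ~~ asc u j)); first exact: W.
    by rewrite negb_or negbK => /andP [Ni Aj] E; symmetry; apply: W => //; rewrite Aj.
  case Ai: (asc u i); case Aj: (asc u j) => //= _.
    move=> E; have [jp _] := nasc (negbT Aj).
    have Pj : j \in Peak u by apply: peakI => //; [rewrite -E | rewrite Aj].
    move/subsetP: PJ => /(_ j Pj); rewrite inE (negbTE jJ) /=.
    case/existsP => k /andP [kJ /eqP kj].
    have : k = i by apply: val_inj => /=; rewrite E /= kj.
    by move=> ki; rewrite -ki kJ in iJ.
  move=> E; have [jp _] := nasc (negbT Aj); have [ip _] := nasc (negbT Ai).
  by apply: val_inj; rewrite (prevoS jp) (prevoS ip) E.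
move/negbT: PJ => /subsetPn [k Pk kJJ].
have [kp Ap Nk] := peakP Pk.
apply/eqP; rewrite cards_eq0; apply/eqP/setP => e; rewrite !inE.
apply/negbTE/negP => /forall_inP H.
have kJ : k \in ~: J by rewrite inE; apply: contra kJJ; rewrite inE => ->.
have pJ : prevo k \in ~: J.
  rewrite inE; apply: contra kJJ => pJ; rewrite inE; apply/orP; right.
  by apply/existsP; exists (prevo k); rewrite pJ /= -(prevoS kp).
have := H _ kJ; have := H _ pJ; rewrite /tgt Ap (negbTE Nk) /=.
by move=> /eqP ->.
Qed.

Unset Implicit Arguments.
Local Open Scope ring_scope.

Theorem proposition3p3 (n : nat) (J : {set 'I_n}) :
  phi (XJ J) =
  [ffun u : 'S_n =>
     2 ^+ #|J| * (\sum_(F : {set 'I_n} | isFn F && (F \subset JJ1 J)) PF F) u].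
Proof.
apply/ffunP => u; rewrite !ffunE sum_ffunE.
have -> : \sum_(w : bn n | w.1 == u) XJ J w =
          \sum_(s : 'S_n | s == u) \sum_(e : {ffun 'I_n -> bool}) XJ J (s, e).
  by rewrite pair_big_dep /=; apply: eq_big => -[s e] /=; rewrite ?andbT.
rewrite big_pred1_eq.
rewrite (eq_bigr (fun e => if Des (n:=n) (u, e) \subset J then 1 else 0)); last first.
  by move=> e _; rewrite ffunE.
have -> : \sum_(e : {ffun 'I_n -> bool}) (if Des (n:=n) (u, e) \subset J then 1 else 0) =
   (#|[pred e : {ffun 'I_n -> bool} | Des (n:=n) (u, e) \subset J]|)%:R :> rat.
  rewrite -sum1_card natr_sum [RHS]big_mkcond /=; apply: eq_bigr => e _.
  by rewrite inE; case: ifP.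
rewrite count_main.
case: ifP => PJ.
  rewrite (bigD1 (Peak u)) /=; last by rewrite isFn_Peak PJ.
  rewrite big1 ?ffunE ?eqxx; last first.
    by move=> F /andP [_ /negbTE]; rewrite ffunE eq_sym => ->.
  by rewrite addr0 mulr1 natrX.
rewrite big1 ?mulr0 // => F /andP [_ FJ]; rewrite ffunE; case: eqP => // E.
by rewrite -E PJ in FJ.
Qed.
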